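(* Let $A\in\mathbb{C}^{n\times n}$ of rank $r>0$ and index $k$ be written in the Hartwig–Spindelböck decomposition $A=U\begin{bmatrix}\Sigma K&\Sigma L\\0&0\end{bmatrix}U^*$ (as in the context). Then: (a) if $m=1$, then $A^{\#_m}=A^{\mathrm{WC}}=U\begin{bmatrix}(\Sigma K)^{\mathrm{WG}}&0\\0&0\end{bmatrix}U^*$; (b) if $m\ge k$ (with $m\in\mathbb{N}=\{1,2,\dots\}$), then $A^{\#_m}=A^{\mathrm{cEP}}=U\begin{bmatrix}(\Sigma K)^{\mathrm{cEP}}&0\\0&0\end{bmatrix}U^*$.
   Context: Hartwig–Spindelböck decomposition: any $A\in\mathbb{C}^{n\times n}$ of rank $r>0$ can be written as $A=U\begin{bmatrix}\Sigma K&\Sigma L\\0&0\end{bmatrix}U^*$ with $U$ unitary, $\Sigma=\mathrm{diag}(\sigma_1I_{r_1},\dots,\sigma_sI_{r_s})$, $\sigma_1>\dots>\sigma_s>0$ the singular values of $A$, $r_1+\dots+r_s=r$, and $K\in\mathbb{C}^{r\times r}$, $L\in\mathbb{C}^{r\times(n-r)}$ with $KK^*+LL^*=I_r$. For a square matrix $B$: $B^\dagger$ Moore–Penrose inverse, $P_B=BB^\dagger$, $B^0=I$, $\mathcal{R}(\cdot)$ column space; $\mathrm{Ind}(B)$ is the smallest nonnegative integer $k$ with $\mathcal{R}(B^k)=\mathcal{R}(B^{k+1})$. The core-EP inverse $B^{\mathrm{cEP}}$ is the unique $X$ with $XBX=X$ and $\mathcal{R}(X)=\mathcal{R}(X^*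 )=\mathcal{R}(B^k)$, $k=\mathrm{Ind}(B)$. The WG inverse is $B^{\mathrm{WG}}:=(B^{\mathrm{cEP}})^2B$ and the WC inverse is $B^{\mathrm{WC}}:=B^{\mathrm{WG}}P_B$. For $m\in\mathbb{N}$, the $m$-weak group inverse is $B^{\mathrm{WG}_m}:=(B^{\mathrm{cEP}})^{m+1}B^m$ and the $m$-weak core inverse is $B^{\#_m}:=B^{\mathrm{WG}_m}P_{B^m}$. *)

(* Defs.v *)
(* Complex n x n matrices are modelled over an arbitrary
   numClosedFieldType C (e.g. the complex numbers); A^* is A ^t* (spectral.v). *)
From HB Require Import structures.
From mathcomp Require Import all_boot all_order all_algebra.
From mathcomp Require Export sesquilinear spectral.
From Stdlib Require Import ClassicalEpsilon.
Set Implicit Arguments. Unset Strict Implicit. Unset Printing Implicit Defensive.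
Import Order.TTheory GRing.Theory Num.Theory.
Local Open Scope ring_scope.
Local Open Scope sesquilinear_scope.

Section GenInv.
Variables (C : numClosedFieldType) (n : nat).
Implicit Types B X Y : 'M[C]_n.

Definition colspace_eq (p q : nat) (X : 'M[C]_(n, p)) (Y : 'M[C]_(n, q)) : Prop :=
  (X^T == Y^T)%MS.

Definition is_MP B X : Prop :=
  [/\ B *m X *m B = B, X *m B *m X = X,
      (B *m X)^t* = B *m X & (X *m B)^t* = X *m B].

Definition MP B : 'M[C]_n := epsilon (inhabits 0) (is_MP B).

Definition Pr B : 'M[C]_n := B *m MP B.

(* index: smallest k with R(B^k) = R(B^(k+1)); such k always exists in [0, n] *)
Definition ind B : nat :=
  find (fun k => ((B ^+ k)^T == (B ^+ k.+1)^T)%MS) (iota 0 n.+1).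

Definition is_cEP B X : Prop :=
  [/\ X *m B *m X = X, colspace_eq X (B ^+ ind B)
    & colspace_eq (X^t*) (B ^+ ind B)].

Definition cEP B : 'M[C]_n := epsilon (inhabits 0) (is_cEP B).

Definition WG B : 'M[C]_n := cEP B *m cEP B *m B.
Definition WC B : 'M[C]_n := WG B *m Pr B.

Definition WGm (m : nat) B : 'M[C]_n := (cEP B) ^+ m.+1 *m B ^+ m.
Definition WCm (m : nat) B : 'M[C]_n := WGm m B *m Pr (B ^+ m).

End GenInv.

(* Main.v *)
Require Import Defs.
From HB Require Import structures.
From mathcomp Require Import all_boot all_order all_algebra.
From mathcomp Require Import sesquilinear spectral.
From Stdlib Require Import ClassicalEpsilon.
From mathcomp Require Import zify.
Set Implicit Arguments. Unset Strict Implicit. Unset Printing Implicit Defensive.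
Import Order.TTheory GRing.Theory Num.Theory.
Local Open Scope ring_scope.
Local Open Scope sesquilinear_scope.



Section Aux.
Variable C : numClosedFieldType.

Lemma ctM m n p (A : 'M[C]_(m,n)) (B : 'M[C]_(n,p)) : (A *m B)^t* = B^t* *m A^t*.
Proof. by rewrite trmx_mul map_mxM. Qed.

Lemma ct1 n : (1%:M : 'M[C]_n)^t* = 1%:M.
Proof. by rewrite trmx1 map_mx1. Qed.

Definition csub n p q (X : 'M[C]_(n,p)) (Y : 'M[C]_(n,q)) := exists D, X = Y *m D.

Lemma csubP n p q (X : 'M[C]_(n,p)) (Y : 'M[C]_(n,q)) :
  (X^T <= Y^T)%MS <-> csub X Y.
Proof.
split.
  by move/submxP=> [D HD]; exists D^T; rewrite -(trmxK X) HD trmx_mul trmxK.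
by move=> [D ->]; rewrite trmx_mul submxMl.
Qed.

Lemma colspace_eqP n p q (X : 'M[C]_(n,p)) (Y : 'M[C]_(n,q)) :
  colspace_eq X Y <-> csub X Y /\ csub Y X.
Proof.
rewrite /colspace_eq; split.
  by move/andP=> [/csubP H1 /csubP H2].
by move=> [/csubP H1 /csubP H2]; apply/andP.
Qed.

Lemma csub_trans n p q o (X : 'M[C]_(n,p)) (Y : 'M[C]_(n,q)) (Z : 'M[C]_(n,o)) :
  csub X Y -> csub Y Z -> csub X Z.
Proof. by move=> [D ->] [E ->]; exists (E *m D); rewrite mulmxA. Qed.

Lemma csub_mul n p q (X : 'M[C]_(n,p)) (D : 'M[C]_(p,q)) : csub (X *m D) X.
Proof. by exists D. Qed.

Lemma ceq_trans n p q o (X : 'M[C]_(n,p)) (Y : 'M[C]_(n,q)) (Z : 'M[C]_(n,o)) :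
  colspace_eq X Y -> colspace_eq Y Z -> colspace_eq X Z.
Proof.
move=> /colspace_eqP [h1 h2] /colspace_eqP [h3 h4]; apply/colspace_eqP.
by split; apply: csub_trans; eauto.
Qed.

Lemma ceq_sym n p q (X : 'M[C]_(n,p)) (Y : 'M[C]_(n,q)) :
  colspace_eq X Y -> colspace_eq Y X.
Proof. by move=> /colspace_eqP [h1 h2]; apply/colspace_eqP. Qed.

Lemma onb_col n p (B : 'M[C]_(n,p)) :
  exists q (F : 'M[C]_(n,q)), F^t* *m F = 1%:M /\ colspace_eq F B.
Proof.
set Q := schmidt (row_base B^T).
have hQ : Q \is unitarymx by apply: schmidt_unitarymx; apply: rank_leq_col.
exists _, Q^T; split.
  move/unitarymxP: hQ => /(congr1 trmx); rewrite trmx_mul trmx1.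
  by rewrite map_trmx trmxK.
rewrite /colspace_eq trmxK; apply/eqmxP.
apply: eqmx_trans (eq_row_base _).
by apply: eqmx_schmidt_free; apply: row_base_free.
Qed.

Lemma onb_row n p (B : 'M[C]_(p,n)) :
  exists q (H : 'M[C]_(q,n)), H *m H^t* = 1%:M /\ (H :=: B)%MS.
Proof.
set Q := schmidt (row_base B).
have hQ : Q \is unitarymx by apply: schmidt_unitarymx; apply: rank_leq_col.
exists _, Q; split; first exact/unitarymxP.
apply: eqmx_trans (eq_row_base _).
by apply: eqmx_schmidt_free; apply: row_base_free.
Qed.

End Aux.



Section Aux2.
Variable C : numClosedFieldType.
Variable n : nat.
Implicit Types B X : 'M[C]_n.

Lemma powS_sub B k : ((B ^+ k.+1)^T <= (B ^+ k)^T)%MS.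
Proof. by rewrite exprSr trmx_mul submxMl. Qed.

Lemma ind_spec B : (ind B <= n)%N /\ colspace_eq (B ^+ ind B) (B ^+ (ind B).+1).
Proof.
set P := (fun k => ((B ^+ k)^T == (B ^+ k.+1)^T)%MS).
have hP : has P (iota 0 n.+1).
  apply/negPn/negP => /hasPn hn.
  have key : forall k, (k <= n.+1)%N -> (\rank (B ^+ k)^T + k <= n)%N.
    elim=> [|k IH] hk.
      by rewrite expr0 trmx1 mxrank1 addn0.
    have hk' : (k <= n)%N by [].
    have := hn k; rewrite mem_iota /= add0n ltnS => /(_ hk').
    rewrite /P => hne.
    have hne' : ~~ (((B ^+ k.+1)^T == (B ^+ k)^T)%MS) by rewrite andbC.
    have hlt := ltn_leqif (mxrank_leqif_eq (powS_sub B k)).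
    rewrite hne' in hlt.
    have := IH (ltnW hk); move: hlt; rewrite addnS => h1 h2.
    by apply: leq_trans h2; rewrite ltn_add2r.
  by have := key n.+1 (leqnn _); rewrite addnS ltnNge leq_addl.
have := nth_find 0 hP; rewrite -/(ind B).
have hlt : (ind B < n.+1)%N by have := hP; rewrite has_find size_iota.
rewrite nth_iota // add0n => hPk; split => //.
Qed.

End Aux2.



Section Aux3.
Variable C : numClosedFieldType.
Variable n : nat.
Implicit Types B X : 'M[C]_n.

Lemma ceq_refl p (X : 'M[C]_(n,p)) : colspace_eq X X.
Proof. by apply/colspace_eqP; split; exists 1%:M; rewrite mulmx1. Qed.

Lemma pow_stab B k : colspace_eq (B ^+ k) (B ^+ k.+1) ->
  forall j, (k <= j)%N -> colspace_eq (B ^+ j) (B ^+ k).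
Proof.
move=> /colspace_eqP [[D hD] _].
have step : forall j, (k <= j)%N -> colspace_eq (B ^+ j.+1) (B ^+ j).
  move=> j hj; apply/colspace_eqP; split.
    by exists B; rewrite exprSr.
  exists D.
  have -> : B ^+ j = B ^+ (j - k) * B ^+ k by rewrite -exprD subnK.
  rewrite hD -!mulmxE mulmxA mulmxE -exprD.
  by rewrite addnS subnK.
elim=> [|j IH] hj.
  have hk0 : k = 0%N by lia.
  by rewrite hk0; apply: ceq_refl.
case: (ltngtP k j.+1) => h; first by apply: ceq_trans (step _ _) (IH _); lia.
  lia.
by rewrite h; apply: ceq_refl.
Qed.

End Aux3.



Section Aux4.
Variable C : numClosedFieldType.
Variable n : nat.
Implicit Types B X : 'M[C]_n.

Lemma MP_exists B : exists X, is_MP B X.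
Proof.
have [p [F [hF hFB]]] := onb_col B.
have [q [H [hH hHB]]] := onb_row B.
have cF : forall m (Y : 'M[C]_(m,p)), Y *m F^t* *m F = Y.
  by move=> m Y; rewrite -mulmxA hF mulmx1.
have cH : forall m (Y : 'M[C]_(m,q)), Y *m H *m H^t* = Y.
  by move=> m Y; rewrite -mulmxA hH mulmx1.
have hBF : B = F *m (F^t* *m B).
  have /colspace_eqP [_ [D hD]] := hFB.
  by rewrite hD !mulmxA cF.
have hBH : B = (B *m H^t*) *m H.
  have : (B <= H)%MS by rewrite hHB.
  by move/submxP=> [E ->]; rewrite cH.
have rF : \rank F = p.
  apply/eqP; rewrite eqn_leq rank_leq_col /=.
  by rewrite -{1}(mxrank1 C p) -hF mxrankM_maxr.
have rFB : \rank F = \rank B.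
  by rewrite -mxrank_tr -(mxrank_tr B); apply: eqmx_rank.
have rH : \rank H = q by apply: mxrank_unitary; apply/unitarymxP.
have rHB : \rank H = \rank B by rewrite hHB.
have eqp : q = p by rewrite -rH rHB -rFB rF.
subst q.
pose M := F^t* *m B *m H^t*.
have hB : B = F *m M *m H.
  by rewrite /M !mulmxA -(mulmxA F) -hBF -hBH.
have uM : M \in unitmx.
  rewrite -row_full_unit /row_full eqn_leq rank_leq_col /=.
  rewrite -{1}rF rFB {1}hB.
  by apply: leq_trans (mxrankM_maxl _ _) _; apply: mxrankM_maxr.
clearbody M.
pose X := H^t* *m invmx M *m F^t*.
have hBX : B *m X = F *m F^t*.
  by rewrite {1}hB /X !mulmxA cH (mulmxK uM).
have hXB : X *m B = H^t* *m H.
  by rewrite hB /X !mulmxA cF (mulmxKV uM).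
exists X; split.
- by rewrite hBX {2}hBF mulmxA.
- by rewrite -mulmxA hBX /X !mulmxA cF.
- by rewrite hBX ctM trmxCK.
- by rewrite hXB ctM trmxCK.
Qed.

Lemma MP_spec B : is_MP B (MP B).
Proof. by apply: epsilon_spec; apply: MP_exists. Qed.

Lemma Pr_char B p (F : 'M[C]_(n,p)) :
  F^t* *m F = 1%:M -> colspace_eq F B -> Pr B = F *m F^t*.
Proof.
move=> hF /colspace_eqP [[E hE] [D hD]].
have [h1 _ h3 _] := MP_spec B.
rewrite /Pr; set X := MP B in h1 h3 *.
have PF : B *m X *m F = F by rewrite {1}hE mulmxA h1 -hE.
have FP : F^t* *m (B *m X) = F^t* by rewrite -h3 -ctM PF.
have hP : B *m X = F *m F^t* *m (B *m X).
  by rewrite hD !mulmxA -(mulmxA F (F^t*)) hF mulmx1.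
by rewrite hP -mulmxA FP.
Qed.

End Aux4.



Section Aux5.
Variable C : numClosedFieldType.
Variable n : nat.
Implicit Types B X : 'M[C]_n.

Lemma exprSm B k : B ^+ k.+1 = B *m B ^+ k. Proof. by rewrite exprS. Qed.
Lemma exprSrm B k : B ^+ k.+1 = B ^+ k *m B. Proof. by rewrite exprSr. Qed.

Lemma cEP_char B p (F : 'M[C]_(n,p)) :
  F^t* *m F = 1%:M -> colspace_eq F (B ^+ ind B) ->
  (F^t* *m B *m F) \in unitmx /\ B *m F = F *m (F^t* *m B *m F) /\
  cEP B = F *m invmx (F^t* *m B *m F) *m F^t*.
Proof.
move=> hF hFB.
have [_ /colspace_eqP [[Z hZ] _]] := ind_spec B.
have /colspace_eqP [[D0 hD0] [E0 hE0]] := hFB.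
have cF : forall m (Y : 'M[C]_(m,p)), Y *m F^t* *m F = Y.
  by move=> m Y; rewrite -mulmxA hF mulmx1.
have hBF0 : B *m F = F *m (E0 *m B *m D0).
  by rewrite {1}hD0 mulmxA -exprSm exprSrm hE0 !mulmxA.
have hBF : B *m F = F *m (F^t* *m B *m F).
  by rewrite -(mulmxA (F^t*)) hBF0 (mulmxA (F^t*)) hF mul1mx.
have hF2 : F = B *m F *m (E0 *m Z *m D0).
  by rewrite {1}hD0 {1}hZ exprSm hE0 !mulmxA.
have uM : (F^t* *m B *m F) \in unitmx.
  have h : (F^t* *m B *m F) *m (E0 *m Z *m D0) = 1%:M.
    by rewrite -hF [X in _ = _ *m X]hF2 !mulmxA.
  by have [] := mulmx1_unit h.
split => //; split => //.
move: (F^t* *m B *m F) uM hBF => M uM hBF.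
have cBF : forall m (Y : 'M[C]_(m,n)), Y *m B *m F = Y *m F *m M.
  by move=> m Y; rewrite -mulmxA hBF mulmxA.
pose X0 := F *m invmx M *m F^t*.
have hX0 : is_cEP B X0.
  split.
  - by rewrite /X0 !mulmxA cBF cF (mulmxKV uM).
  - apply: ceq_trans hFB; apply/colspace_eqP; split.
      by exists (invmx M *m F^t*); rewrite /X0 mulmxA.
    by exists (F *m M); rewrite /X0 !mulmxA cF (mulmxKV uM).
  - apply: ceq_trans hFB; apply/colspace_eqP.
    have -> : X0^t* = F *m (invmx M)^t* *m F^t*.
      by rewrite /X0 !ctM trmxCK mulmxA.
    split; first by exists ((invmx M)^t* *m F^t*); rewrite mulmxA.
    exists (F *m M^t*); rewrite !mulmxA cF -mulmxA -ctM mulmxV //.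
    by rewrite ct1 mulmx1.
have uniq : forall X, is_cEP B X -> X = X0.
  move=> X [hXBX hXc hXc'].
  have /colspace_eqP [[D1 hD1] [E1 hE1]] := ceq_trans hXc (ceq_sym hFB).
  have /colspace_eqP [[D2 hD2] _] := ceq_trans hXc' (ceq_sym hFB).
  have hX1 : X = F *m F^t* *m X by rewrite hD1 !mulmxA cF.
  have hX2 : X = X *m F *m F^t*.
    have -> : X = D2^t* *m F^t* by rewrite -(trmxCK X) hD2 ctM.
    by rewrite -!mulmxA (mulmxA (F^t*)) hF mul1mx.
  pose Y := F^t* *m X *m F.
  have hXY : X = F *m Y *m F^t* by rewrite /Y !mulmxA -hX1 -hX2.
  have uY : Y \in unitmx.
    have h : Y *m (F^t* *m E1) = 1%:M.
      by rewrite /Y -hF [X in _ = _ *m X]hE1 [in RHS]hX2 !mulmxA.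
    by have [] := mulmx1_unit h.
  clearbody Y.
  have h2 : Y *m M *m Y = Y.
    have := congr1 (fun W => F^t* *m W *m F) hXBX.
    rewrite hXY !mulmxA hF mul1mx !cF cBF cF.
    by [].
  have h3 : Y *m M = 1%:M.
    by have := congr1 (mulmx^~ (invmx Y)) h2; rewrite (mulmxK uY) mulmxV.
  have hYM : Y = invmx M.
    by rewrite -[invmx M]mul1mx -h3 -mulmxA mulmxV // mulmx1.
  by rewrite hXY hYM.
apply: uniq; rewrite /cEP; apply: epsilon_spec; by exists X0.
Qed.

End Aux5.



Lemma expr0m (C : numClosedFieldType) k (B : 'M[C]_k) : B ^+ 0 = 1%:M. Proof. by []. Qed.

Section Aux6.
Variable C : numClosedFieldType.
Variable n : nat.
Implicit Types B X : 'M[C]_n.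


Lemma WCm_cEP B m : (ind B <= m)%N -> WCm m B = cEP B.
Proof.
move=> hm.
have [p [F [hF hFB]]] := onb_col (B ^+ ind B).
have [uM [hBF hc]] := cEP_char hF hFB.
move: (F^t* *m B *m F) uM hBF hc => M uM hBF hc.
have cF : forall m (Y : 'M[C]_(m,p)), Y *m F^t* *m F = Y.
  by move=> m0 Y; rewrite -mulmxA hF mulmx1.
have hPr : Pr (B ^+ m) = F *m F^t*.
  apply: Pr_char => //; apply: ceq_trans hFB _.
  by apply: ceq_sym; apply: pow_stab (ind_spec B).2 _ hm.
have hX : forall j, cEP B ^+ j.+1 = F *m invmx M ^+ j.+1 *m F^t*.
  elim=> [|j IH]; first by rewrite !expr1.
  by rewrite exprSm IH hc !mulmxA cF -(mulmxA F (invmx M)) -exprSm.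
have hBm : forall j, B ^+ j *m F = F *m M ^+ j.
  elim=> [|j IH]; first by rewrite !expr0m mul1mx mulmx1.
  by rewrite exprSrm -mulmxA hBF mulmxA IH -mulmxA -exprSrm.
have hW : forall j, invmx M ^+ j.+1 *m M ^+ j = invmx M.
  elim=> [|j IH]; first by rewrite expr1 expr0m mulmx1.
  by rewrite (exprSrm (invmx M) j.+1) (exprSm M j) mulmxA -(mulmxA _ (invmx M) M) mulVmx // mulmx1.
rewrite /WCm /WGm hPr hX hc mulmxA -(mulmxA _ (B ^+ m) F) hBm mulmxA cF.
by rewrite -(mulmxA F) hW.
Qed.

End Aux6.



Section Blk.
Variables (C : numClosedFieldType) (r s : nat).

Lemma colmx0M q o (X : 'M[C]_(r,q)) (D : 'M[C]_(q,o)) :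
  col_mx X (0 : 'M_(s,q)) *m D = col_mx (X *m D) 0.
Proof. by rewrite mul_col_mx mul0mx. Qed.

Lemma ct_col0 q (X : 'M[C]_(r,q)) :
  (col_mx X (0 : 'M_(s,q)))^t* = row_mx (X^t*) 0.
Proof. by rewrite tr_col_mx map_row_mx trmx0 map_mx0. Qed.

Lemma blk0M q (X : 'M[C]_r) (Y : 'M[C]_(r,q)) (Z : 'M[C]_(s,q)) :
  block_mx X 0 0 (0 : 'M_s) *m col_mx Y Z = col_mx (X *m Y) 0.
Proof. by rewrite mul_block_col !mul0mx !addr0. Qed.

Lemma row0col0 q (X : 'M[C]_(q,r)) (Y : 'M[C]_(r,q)) :
  row_mx X (0 : 'M_(q,s)) *m col_mx Y 0 = X *m Y.
Proof. by rewrite mul_row_col mulmx0 addr0. Qed.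

Lemma col0row0 q (X : 'M[C]_(r,q)) (Y : 'M[C]_(q,r)) :
  col_mx X (0 : 'M_(s,q)) *m row_mx Y (0 : 'M_(q,s)) = block_mx (X *m Y) 0 0 0.
Proof. by rewrite mul_col_row !mulmx0 !mul0mx. Qed.

Lemma blkc0 q (X : 'M[C]_r) (P : 'M[C]_(r,s)) (Y : 'M[C]_(r,q)) :
  block_mx X P 0 (0 : 'M_s) *m col_mx Y 0 = col_mx (X *m Y) 0.
Proof. by rewrite mul_block_col !mulmx0 !mul0mx !addr0. Qed.

Lemma blkM (X Y : 'M[C]_r) (P : 'M[C]_(r,s)) (Q : 'M[C]_s) :
  block_mx X 0 0 (0 : 'M_s) *m block_mx Y P 0 Q = block_mx (X *m Y) (X *m P) 0 0.
Proof. by rewrite mulmx_block !mulmx0 !mul0mx !addr0. Qed.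

Lemma blkM1 (X : 'M[C]_r) (P : 'M[C]_(r,s)) :
  block_mx X P 0 (0 : 'M_s) *m block_mx (1%:M : 'M_r) 0 0 (0 : 'M_s)
  = block_mx X 0 0 (0 : 'M_s).
Proof. by rewrite mulmx_block !mulmx0 !mul0mx !addr0 mulmx1. Qed.

End Blk.

Theorem corollary6p2 (C : numClosedFieldType) (r s : nat)
    (A U : 'M[C]_(r + s)) (d : 'rV[C]_r) (K : 'M[C]_r) (L : 'M[C]_(r, s)) :
  (0 < r)%N ->
  \rank A = r ->
  U \is unitarymx ->
  (forall i : 'I_r, 0 < d 0 i) ->
  (forall i j : 'I_r, (i <= j)%N -> d 0 j <= d 0 i) ->
  (forall i : 'I_r, eigenvalue (A *m A^t*) (d 0 i ^+ 2)) ->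
  (forall x : C, x != 0 -> eigenvalue (A *m A^t*) x ->
     exists i : 'I_r, x = d 0 i ^+ 2) ->
  K *m K^t* + L *m L^t* = 1%:M ->
  A = U *m block_mx (diag_mx d *m K) (diag_mx d *m L) 0 0 *m U^t* ->
  (WCm 1 A = WC A /\
   WC A = U *m block_mx (WG (diag_mx d *m K)) 0 0 0 *m U^t*) /\
  (forall m : nat, (0 < m)%N -> (ind A <= m)%N ->
     WCm m A = cEP A /\
     cEP A = U *m block_mx (cEP (diag_mx d *m K)) 0 0 0 *m U^t*).
Proof.
move=> r0 _ hUu hd _ _ _ hKL hA.
set Sg := diag_mx d in hA *.
set T := Sg *m K in hA *.
set S := Sg *m L in hA.
set Mb := block_mx T S 0 0 in hA.
have hU : U *m U^t* = 1%:M by apply/unitarymxP.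
have hU' : U^t* *m U = 1%:M.
  have : U^t* \is unitarymx by rewrite trmxC_unitary.
  by move/unitarymxP; rewrite trmxCK.
have cU : forall m (Y : 'M[C]_(m, r + s)), Y *m U^t* *m U = Y.
  by move=> m Y; rewrite -mulmxA hU' mulmx1.
have uSg : Sg \in unitmx.
  rewrite unitmxE det_diag unitfE; apply/prodf_neq0 => i _.
  exact: lt0r_neq0 (hd i).
set R0 := row_mx T S.
have hMb : Mb = col_mx R0 0 by rewrite /Mb block_mxEv row_mx0.
set Rinv := col_mx (K^t*) (L^t*) *m invmx Sg.
have hR : R0 *m Rinv = 1%:M.
  rewrite /Rinv mulmxA mul_row_col /T /S -!mulmxA -mulmxDr hKL mulmx1.
  by rewrite mulmxV.
clearbody Rinv T S.
have hMpow : forall j, Mb ^+ j.+1 = col_mx (T ^+ j *m R0) 0.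
  elim=> [|j IH]; first by rewrite expr1 expr0m mul1mx.
  by rewrite exprSm IH {1}/Mb mul_block_col !mul0mx !mulmx0 !addr0 mulmxA -exprSm.
have hApow : forall j, A ^+ j = U *m Mb ^+ j *m U^t*.
  elim=> [|j IH]; first by rewrite !expr0m mulmx1 hU.
  by rewrite exprSm IH {1}hA !mulmxA cU -(mulmxA U Mb) -exprSm.
have hAc : forall j, colspace_eq (A ^+ j.+1) (U *m col_mx (T ^+ j) (0 : 'M_(s, r))).
  move=> j; rewrite hApow hMpow; apply/colspace_eqP; split.
    by exists (R0 *m U^t*); rewrite -colmx0M !mulmxA.
  exists (U *m Rinv); rewrite !mulmxA cU -mulmxA colmx0M -mulmxA hR mulmx1.
  by [].
have liftc : forall q o (X : 'M[C]_(r,q)) (Y : 'M[C]_(r,o)), colspace_eq X Y ->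
    colspace_eq (U *m col_mx X (0 : 'M_(s,q))) (U *m col_mx Y (0 : 'M_(s,o))).
  move=> q o X Y /colspace_eqP [[D1 h1] [D2 h2]]; apply/colspace_eqP; split.
    by exists D1; rewrite h1 -colmx0M mulmxA.
  by exists D2; rewrite h2 -colmx0M mulmxA.
have [pT [FT [hFT hFTc]]] := onb_col (T ^+ ind T).
have [uMT [_ hcT]] := cEP_char hFT hFTc.
set FA := U *m col_mx FT (0 : 'M_(s, pT)).
have hFA : FA^t* *m FA = 1%:M.
  by rewrite /FA ctM ct_col0 !mulmxA cU row0col0.
have hFAc : colspace_eq FA (A ^+ ind A).
  have [hiA hsA] := ind_spec A.
  have [hiT hsT] := ind_spec T.
  have hle : (ind A <= (r + s).+1)%N by lia.
  have hle2 : (ind T <= (r + s))%N by lia.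
  apply: ceq_trans (pow_stab hsA hle).
  apply: ceq_trans (ceq_sym (hAc (r + s)%N)).
  apply: liftc; exact: ceq_trans hFTc (ceq_sym (pow_stab hsT hle2)).
have [_ [_ hcA0]] := cEP_char hFA hFAc.
have hMA : FA^t* *m A *m FA = FT^t* *m T *m FT.
  rewrite /FA ctM ct_col0 hA !mulmxA cU -mulmxA cU.
  by rewrite /Mb blkc0 row0col0 mulmxA.
have hcA : cEP A = U *m block_mx (cEP T) 0 0 0 *m U^t*.
  rewrite hcA0 hMA hcT /FA ctM ct_col0 -(mulmxA U) colmx0M mulmxA.
  by rewrite -(mulmxA U) col0row0.
split; last first.
  move=> m _ hm; split; last exact: hcA.
  exact: WCm_cEP hm.
set F1 := U *m col_mx (1%:M : 'M_r) (0 : 'M_(s, r)).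
have hF1 : F1^t* *m F1 = 1%:M.
  by rewrite /F1 ctM ct_col0 !mulmxA cU row0col0 mulmx1 ct1.
have hF1c : colspace_eq F1 A.
  by apply: ceq_sym; have := hAc 0%N; rewrite expr1 expr0m.
have hPr : Pr A = U *m block_mx 1%:M 0 0 0 *m U^t*.
  rewrite (Pr_char hF1 hF1c) /F1 ctM ct_col0 ct1 mulmxA -(mulmxA U).
  by rewrite col0row0 mulmx1.
split.
  by rewrite /WCm /WGm /WC /WG expr1 expr2.
rewrite /WC /WG hPr hcA hA.
transitivity (U *m (block_mx (cEP T) 0 0 (0 : 'M_s) *m block_mx (cEP T) 0 0 (0 : 'M_s) *m Mb
   *m block_mx (1%:M : 'M_r) 0 0 (0 : 'M_s)) *m U^t*).
  by rewrite !mulmxA !cU.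
by rewrite blkM mulmx0 /Mb blkM blkM1.
Qed.
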